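(* Let $h:X\to X$ be a minimal homeomorphism of a compact connected Hausdorff space $X$ and let $\chi$ be an eigenfunction of $h$ whose image contains more than one point. Then $\chi$ is surjective.
   Context: An eigenfunction of $h$ is a continuous map $\chi:X\to\mathbb{R}/\mathbb{Z}$ such that $\chi\circ h=R_\alpha\circ\chi$ for some $\alpha\in\mathbb{R}/\mathbb{Z}$, where $R_\alpha(x)=x+\alpha$ is the rotation by $\alpha$. *)

(* Defs.v *)
From HB Require Import structures.
From mathcomp Require Import all_boot all_order all_algebra.
From mathcomp Require Import all_classical all_reals all_analysis.
Set Implicit Arguments. Unset Strict Implicit. Unset Printing Implicit Defensive.
Import Order.TTheory GRing.Theory Num.Theory.
Import numFieldNormedType.Exports.
Local Open Scope classical_set_scope.
Local Open Scope ring_scope.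

(* The circle R/Z is modelled by real representatives: a point of R/Z is the
   class of a real number, two reals denote the same point iff they differ by
   an integer, and the topology of R/Z is that of the quotient metric
   d([a],[b]) = dist(a - b, Z). *)

Definition eqZ {R : realType} (a b : R) : Prop := exists k : int, a - b = k%:~R.

Definition fracR {R : realType} (x : R) : R := x - (Num.floor x)%:~R.

Definition cdist {R : realType} (a b : R) : R :=
  Num.min (fracR (a - b)) (1 - fracR (a - b)).

Definition continuous_RZ {R : realType} {X : topologicalType} (chi : X -> R) : Prop :=
  forall (x : X) (e : R), 0 < e -> \forall y \near x, cdist (chi y) (chi x) < e.

Definition eigenfunction {R : realType} {X : topologicalType}
  (h : X -> X) (chi : X -> R) : Prop :=
  continuous_RZ chi /\ exists alpha : R, forall x, eqZ (chi (h x)) (chi x + alpha).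

Definition homeomorphism {X : topologicalType} (h : X -> X) : Prop :=
  exists g : X -> X, [/\ cancel h g, cancel g h, continuous h & continuous g].

(* full (two-sided) orbit of x under a bijection h : {h^n x | n in Z} *)
Definition full_orbit {X : Type} (h : X -> X) (x : X) : set X :=
  [set y | exists n : nat, y = iter n h x \/ iter n h y = x].

Definition minimal_map {X : topologicalType} (h : X -> X) : Prop :=
  forall x : X, closure (full_orbit h x) = [set: X].

(* Main.v *)
Require Import Defs.
From HB Require Import structures.
From mathcomp Require Import all_boot all_order all_algebra.
From mathcomp Require Import all_classical all_reals all_analysis.
From mathcomp Require Import ring lra.
Import Order.TTheory GRing.Theory Num.Theory.
Import numFieldNormedType.Exports.
Local Open Scope classical_set_scope.
Local Open Scope ring_scope.

Section H.
Variable R : realType.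
Implicit Types a b x s e : R.

Lemma fracR_ge0 x : 0 <= fracR x.
Proof. by rewrite /fracR subr_ge0 Num.Theory.floor_le. Qed.

Lemma fracR_lt1 x : fracR x < 1.
Proof. have := Num.Theory.floorD1_gt x; rewrite /fracR intrD; lra. Qed.

Lemma fracR_shift x s (k : int) : 0 <= s < 1 -> x = k%:~R + s -> fracR x = s.
Proof.
move=> /andP[s0 s1] ->; rewrite /fracR.
have -> : Num.floor (k%:~R + s) = k.
  by apply: Num.Theory.floor_def; rewrite intrD; apply/andP; split; lra.
ring.
Qed.

Lemma fracR_eqZ a b : eqZ a b -> fracR a = fracR b.
Proof.
move=> [k hk]; apply: (@fracR_shift _ _ (Num.floor b + k)).
  by rewrite fracR_ge0 fracR_lt1.
rewrite /fracR intrD; lra.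
Qed.

Lemma fracR0 a : fracR a = 0 -> eqZ a 0.
Proof. by rewrite /fracR => h; exists (Num.floor a); lra. Qed.

Lemma int_small (k : int) : `|k%:~R : R| < 1 -> k = 0.
Proof.
move=> h; apply/eqP; apply: contraLR h => nz; rewrite -leNgt.
apply: norm_intr_ge1; first exact: intr_int.
by rewrite intr_eq0.
Qed.

Lemma cdist_sub a b t : cdist (a - t) (b - t) = cdist a b.
Proof. by rewrite /cdist (_ : a - t - (b - t) = a - b) //; ring. Qed.

Lemma cdist_close a b e : cdist a b < e -> e <= fracR b -> e <= 1 - fracR b ->
  `|fracR a - fracR b| < e.
Proof.
rewrite /cdist gt_min => /orP h eb eb1.
have r0 := fracR_ge0 (a - b); have r1 := fracR_lt1 (a - b).
have b0 := fracR_ge0 b; have b1 := fracR_lt1 b.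
case: h => h.
- have -> : fracR a = fracR b + fracR (a - b).
    apply: (@fracR_shift _ _ (Num.floor b + Num.floor (a - b))).
      apply/andP; split; lra.
    rewrite /fracR intrD; lra.
  rewrite (_ : fracR b + fracR (a - b) - fracR b = fracR (a - b)); last ring.
  by rewrite ger0_norm.
- have -> : fracR a = fracR b + fracR (a - b) - 1.
    apply: (@fracR_shift _ _ (Num.floor b + Num.floor (a - b) + 1)).
      apply/andP; split; lra.
    rewrite /fracR !intrD; lra.
  rewrite ltr_norml; apply/andP; split; lra.
Qed.
End H.

Theorem lemma5p2 (R : realType) (X : topologicalType) (h : X -> X) (chi : X -> R) :
  compact [set: X] -> connected [set: X] -> hausdorff_space X ->
  homeomorphism h -> minimal_map h ->
  eigenfunction h chi ->
  (exists x y : X, ~ eqZ (chi x) (chi y)) ->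
  forall t : R, exists x : X, eqZ (chi x) t.
Proof.
move=> cX conX _ [g [hg gh hc gc]] minh [chic [alpha Halpha]] [x1 [y1 Hne]] t.
case: (pselect (exists x, eqZ (chi x) t)) => // Hno; exfalso.
pose psi x := fracR (chi x - t).
have psi0 x : 0 < psi x.
  rewrite lt_neqAle fracR_ge0 andbT; apply/eqP => /esym /fracR0 [k hk].
  by apply: Hno; exists x; exists k; rewrite -hk subr0.
have psi1 x : psi x < 1 by apply: fracR_lt1.
have psic : continuous psi.
  move=> x; apply/cvgrPdist_lt => eps eps0.
  pose e := Num.min eps (Num.min (psi x) (1 - psi x)).
  have e0 : 0 < e by rewrite !lt_min eps0 psi0 subr_gt0 psi1.
  have := chic x e e0; apply: filterS => y Hy.
  rewrite distrC; apply: (lt_le_trans (y := e)); last by rewrite ge_min lexx.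
  apply: cdist_close; first by rewrite cdist_sub.
    by rewrite /e ge_min; apply/orP; right; rewrite ge_min lexx.
  by rewrite /e ge_min; apply/orP; right; rewrite ge_min lexx orbT.
pose f x := psi (h x) - psi x.
have fc : continuous f.
  move=> x; apply: cvgB; last exact: psic.
  exact: (continuous_comp (hc x) (psic (h x))).
have fZ x y : exists k : int, f x - f y = k%:~R.
  have [k1 h1] := Halpha x; have [k2 h2] := Halpha y.
  exists (k1 - Num.floor (chi (h x) - t) + Num.floor (chi x - t)
          - (k2 - Num.floor (chi (h y) - t) + Num.floor (chi y - t))).
  rewrite /f /psi /fracR !intrD !intrN !intrD !intrN; lra.
have fconst x : f x = f x1.
  suff HB : [set y | f y = f x1] = [set: X].
    by have : [set y | f y = f x1] x by rewrite HB.
  apply: conX.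
  - by exists x1.
  - exists [set y | f y = f x1]; last by rewrite setTI.
    rewrite openE => y /= Hy.
    have := (cvgrPdist_lt _ _).1 (fc y) (1/2) ltac:(lra).
    apply: filterS => z Hz /=.
    have [k hk] := fZ y z.
    have k0 : k = 0.
      apply: (@int_small R); rewrite -hk. lra.
    move: hk; rewrite k0 => hk; lra.
  - exists [set y | f y = f x1]; last by rewrite setTI.
    apply: (@preimage_closed _ _ f [set r | r = f x1]).
      by move=> z _; apply: fc.
    exact: closed_eq.
have ne : [set: X] !=set0 by exists x1.
have [cM _ HM] := compact_EVT_max ne cX (continuous_subspaceT psic).
have [cm _ Hm] := compact_EVT_min ne cX (continuous_subspaceT psic).
have fM : f cM <= 0 by rewrite /f subr_le0; apply: HM; rewrite inE.
have fm : 0 <= f cm by rewrite /f subr_ge0; apply: Hm; rewrite inE.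
have psih x : psi (h x) = psi x.
  have := fconst x; have := fconst cM; have := fconst cm; move: fM fm; rewrite /f; lra.
have psiit n x : psi (iter n h x) = psi x.
  by elim: n => // n IH; rewrite iterS psih.
have Hcl : closure (full_orbit h x1) `<=` [set y | psi y = psi x1].
  have cC : closed [set y | psi y = psi x1].
    apply: (@preimage_closed _ _ psi [set r | r = psi x1]).
      by move=> z _; apply: psic.
    exact: closed_eq.
  rewrite ((closure_id _).1 cC); apply: closureS => y [n [->|<-]].
    exact: psiit.
  by rewrite psiit.
have := Hcl y1; rewrite minh => /(_ I) /= eqy.
apply: Hne; exists (Num.floor (chi x1 - t) - Num.floor (chi y1 - t)).
move: eqy; rewrite /psi /fracR intrD intrN; lra.
Qed.
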